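(* Let $\mathcal{X}=\{1,\dots,n\}$, let $\pi$ be a strictly positive probability distribution on $\mathcal{X}$ ordered so that $\pi(1)\le\pi(2)\le\dots\le\pi(n)$, let $P$ be a transition matrix with $\pi P=\pi$, let $2\le k\le n$, and let $\alpha\in[0,1)$. For a partition $(\mathcal{O}_i)_{i=1}^k$ of $\mathcal{X}$ into $k$ nonempty proper subsets, let $G$ be its Gibbs kernel, $\overline{\pi}=(\pi(\mathcal{O}_1),\dots,\pi(\mathcal{O}_k))$, and $Q_\alpha$, $\widetilde{\pi}_\alpha$, $\widetilde{\Pi}_\alpha$ as defined below. Then, as functions of the partition, $$\operatorname*{argmin}\mathrm{KL}_{\widetilde{\pi}_\alpha}(Q_\alpha\|\widetilde{\Pi}_\alpha)=\operatorname*{argmin}\mathrm{KL}_\pi(G\|\Pi)=\operatorname*{argmin}H(\overline{\pi}),$$ and the minimum is attained by the partition $\mathcal{O}_i=\{i\}$ for $1\le i\le k-1$ and $\mathcal{O}_k=\{k,k+1,\dots,n\}$.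
   Context: Gibbs kernel: $G(x,y)=\pi(y)/\pi(\mathcal{O}(x))$ if $y\in\mathcal{O}(x)$ and $0$ otherwise, $\mathcal{O}(x)$ the block containing $x$, $\pi(\mathcal{O})=\sum_{z\in\mathcal{O}}\pi(z)$. $\Pi$ is the matrix with every row equal to $\pi$. With $R(+1)=1-\alpha$, $R(-1)=\alpha$: $Q_\alpha$ is the transition matrix on $\mathcal{X}\times\{-1,+1\}$ with $Q_\alpha((x,i),(y,+1))=(1-\alpha)G(x,y)$, $Q_\alpha((x,i),(y,-1))=\alpha P(x,y)$; $\widetilde{\pi}_\alpha(x,i)=\pi(x)R(i)$; $\widetilde{\Pi}_\alpha$ has every row equal to $\widetilde{\pi}_\alpha$. $\mathrm{KL}_\mu(P\|Q)=\sum_{x,y}\mu(x)P(x,y)\log\frac{P(x,y)}{Q(x,y)}$ with $0\log(0/a)=0$; $H(\mu)=-\sum_i\mu(i)\log\mu(i)$. *)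

(* Defs.v *)
From HB Require Import structures.
From mathcomp Require Import all_boot all_order all_algebra.
From mathcomp Require Import reals exp.
Set Implicit Arguments. Unset Strict Implicit. Unset Printing Implicit Defensive.
Import Order.TTheory GRing.Theory Num.Theory.
Local Open Scope ring_scope.

Section Defs.
Variable R : realType.

Definition KLdiv (T : finType) (mu : T -> R) (P Q : T -> T -> R) : R :=
  \sum_(x : T) \sum_(y : T)
     (if P x y == 0 then 0 else mu x * P x y * ln (P x y / Q x y)).

Definition massOf (n : nat) (pi : 'I_n -> R) (O : {set 'I_n}) : R :=
  \sum_(z in O) pi z.

Definition gibbs (n : nat) (pi : 'I_n -> R) (B : {set {set 'I_n}})
  (x y : 'I_n) : R :=
  if y \in pblock B x then pi y / massOf pi (pblock B x) else 0.

Definition PiMat (n : nat) (pi : 'I_n -> R) (x y : 'I_n) : R := pi y.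

(* R(+1) = 1 - alpha, R(-1) = alpha ; the sign +1 is encoded as [true] *)
Definition Rw (alpha : R) (i : bool) : R := if i then 1 - alpha else alpha.

(* Q_alpha on X x {-1,+1} (+1 = true, -1 = false) *)
Definition Qalpha (n : nat) (pi : 'I_n -> R) (P : 'M[R]_n) (alpha : R)
  (B : {set {set 'I_n}}) (u v : 'I_n * bool) : R :=
  if v.2 then (1 - alpha) * gibbs pi B u.1 v.1 else alpha * P u.1 v.1.

Definition pitilde (n : nat) (pi : 'I_n -> R) (alpha : R) (u : 'I_n * bool) : R :=
  pi u.1 * Rw alpha u.2.

Definition Pitilde (n : nat) (pi : 'I_n -> R) (alpha : R) (u v : 'I_n * bool) : R :=
  pitilde pi alpha v.

Definition blockEntropy (n : nat) (pi : 'I_n -> R) (B : {set {set 'I_n}}) : R :=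
  - \sum_(O in B) massOf pi O * ln (massOf pi O).

Definition argmin (T : finType) (S : {set T}) (f : T -> R) : {set T} :=
  [set x in S | [forall y in S, f x <= f y]].

End Defs.

Definition kPartitions (n k : nat) : {set {set {set 'I_n}}} :=
  [set B | partition B [set: 'I_n] & #|B| == k].

(* the partition {1},...,{k-1},{k,...,n}, written 0-indexed:
   {0},...,{k-2},{k-1,...,n-1} *)
Definition extremalPartition (n k : nat) : {set {set 'I_n}} :=
  [set [set x] | x : 'I_n & (x < k.-1)%N] :|: [set [set x : 'I_n | (k.-1 <= x)%N]].

(* Main.v *)
Require Import Defs.
From HB Require Import structures.
From mathcomp Require Import all_boot all_order all_algebra.
From mathcomp Require Import reals exp.
From mathcomp Require Import ring lra.
Import Order.TTheory GRing.Theory Num.Theory.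
Local Open Scope ring_scope.

Section Aux.
Variable R : realType.
Definition psi (t : R) := t * ln t.

Lemma ln_le_sub1 (z : R) : 0 < z -> ln z <= z - 1.
Proof.
move=> z0; have := @le_ln1Dx R (z - 1).
have -> : 1 + (z - 1) = z by ring.
apply; lra.
Qed.

Lemma psi_tangent {x y : R} : 0 < x -> 0 < y ->
  psi x + (ln x + 1) * (y - x) <= psi y.
Proof.
move=> x0 y0; rewrite /psi.
have h := @ln_le_sub1 _ (divr_gt0 x0 y0).
rewrite ln_div ?posrE // in h.
have : y * (ln x - ln y) <= y * (x / y - 1) by rewrite ler_pM2l.
rewrite mulrBr mulrBr mulrCA divff ?gt_eqF // mulr1 mulr1 => h2.
have -> : x * ln x + (ln x + 1) * (y - x) = y * ln x + y - x by ring.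
lra.
Qed.

Lemma psi_sum (I : finType) (Pr : pred I) (x y : I -> R) (a : R) :
  0 < a -> (forall i, Pr i -> 0 < y i /\ y i <= x i /\ x i <= a) ->
  psi a + \sum_(i | Pr i) psi (x i) <=
  psi (a + \sum_(i | Pr i) (x i - y i)) + \sum_(i | Pr i) psi (y i).
Proof.
move=> a0 H.
have D0 : 0 <= \sum_(i | Pr i) (x i - y i).
  by apply: sumr_ge0 => i /H [_ [h _]]; rewrite subr_ge0.
have aD : 0 < a + \sum_(i | Pr i) (x i - y i) by rewrite ltr_wpDr.
have t1 := psi_tangent a0 aD.
rewrite [a + _]addrC addrK in t1.
have t2 : \sum_(i | Pr i) (psi (x i) + (ln (x i) + 1) * (y i - x i))
   <= \sum_(i | Pr i) psi (y i).
  apply: ler_sum => i /H [y0 [yx xa]]; apply: psi_tangent => //.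
  exact: lt_le_trans yx.
rewrite big_split /= in t2.
have t3 : \sum_(i | Pr i) (ln (x i) + 1) * (y i - x i)
   >= - ((ln a + 1) * \sum_(i | Pr i) (x i - y i)).
  rewrite mulr_sumr -sumrN; apply: ler_sum => i /H [y0 [yx xa]].
  have x0 : 0 < x i by exact: lt_le_trans yx.
  have : ln (x i) <= ln a by rewrite ler_ln ?posrE.
  have : 0 <= x i - y i by rewrite subr_ge0.
  move=> h1 h2.
  have : (ln (x i) + 1) * (x i - y i) <= (ln a + 1) * (x i - y i).
    by rewrite ler_wpM2r // lerD2r.
  have -> : (ln (x i) + 1) * (y i - x i) = - ((ln (x i) + 1) * (x i - y i)) by ring.
  by rewrite lerN2.
rewrite addrC in t1; lra.
Qed.

Lemma massOf_gt0 {n} {p : 'I_n -> R} {O : {set 'I_n}} {x} :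
  (forall x, 0 < p x) -> x \in O -> 0 < massOf p O.
Proof.
move=> pp xO; rewrite /massOf (bigD1 x) //=; apply: ltr_wpDr => //.
by apply: sumr_ge0 => i _; apply: ltW.
Qed.

Lemma KLG n (p : 'I_n -> R) (B : {set {set 'I_n}}) :
  (forall x, 0 < p x) -> partition B [set: 'I_n] ->
  KLdiv p (gibbs p B) (PiMat p) = blockEntropy p B.
Proof.
move=> pp /and3P [/eqP cov triv nz].
rewrite /KLdiv /blockEntropy.
have -> : \sum_(x : 'I_n) \sum_(y : 'I_n)
     (if gibbs p B x y == 0 then 0 else p x * gibbs p B x y * ln (gibbs p B x y / PiMat p x y))
   = \sum_(x in cover B) \sum_(y : 'I_n)
     (if gibbs p B x y == 0 then 0 else p x * gibbs p B x y * ln (gibbs p B x y / PiMat p x y)).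
  by rewrite cov; apply: eq_bigl => x; rewrite inE.
rewrite (big_trivIset _ triv) /= -sumrN; apply: eq_bigr => O OB.
rewrite /massOf mulr_suml -sumrN; apply: eq_bigr => x xO.
have pbx : pblock B x = O by exact: def_pblock.
have m0 : 0 < massOf p O by exact: (massOf_gt0 pp xO).
rewrite /gibbs pbx.
rewrite (bigID (fun y => y \in O)) /= [X in _ + X]big1; last first.
  by move=> y /negbTE ->; rewrite eqxx.
rewrite addr0.
transitivity (\sum_(y in O) p x * (p y / massOf p O) * - ln (massOf p O)).
  apply: eq_bigr => y yO; rewrite yO.
  have py := pp y.
  rewrite mulf_eq0 invr_eq0 (gt_eqF py) (gt_eqF m0) /=.
  congr (_ * _); rewrite /PiMat mulrAC divff ?gt_eqF // mul1r.
  by rewrite lnV ?posrE.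
rewrite -mulr_suml -mulr_sumr -mulr_suml divff ?gt_eqF // mulr1.
by rewrite mulrN.
Qed.

Lemma sum_pair n (F : 'I_n * bool -> R) :
  \sum_(u : 'I_n * bool) F u = \sum_(x : 'I_n) (F (x, true) + F (x, false)).
Proof.
rewrite (eq_bigr (fun u => F (u.1, u.2))); last by case.
rewrite -(pair_bigA _ (fun x b => F (x, b))) /=; apply: eq_bigr => x _; by rewrite big_bool.
Qed.

Lemma scale_term (c w a mu r : R) : 0 < c -> 
  (if c * a == 0 then 0 else mu * w * (c * a) * ln (c * a / (r * c)))
  = w * (c * (if a == 0 then 0 else mu * a * ln (a / r))).
Proof.
move=> c0; rewrite mulf_eq0 (gt_eqF c0) /=.
case: (a == 0); first by rewrite !mulr0.
have -> : c * a / (r * c) = a / r.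
  rewrite invfM [c * a]mulrC -mulrA [c * _]mulrC -mulrA mulVf ?gt_eqF // mulr1 //.
ring.
Qed.

Lemma KLQ n (p : 'I_n -> R) (P : 'M[R]_n) alpha B :
  0 <= alpha -> alpha < 1 ->
  KLdiv (pitilde p alpha) (Qalpha p P alpha B) (Pitilde p alpha)
  = (1 - alpha) * KLdiv p (gibbs p B) (PiMat p) + alpha * KLdiv p P (PiMat p).
Proof.
move=> a0 a1.
have b0 : 0 < 1 - alpha by rewrite subr_gt0.
rewrite /KLdiv sum_pair !mulr_sumr -big_split /=; apply: eq_bigr => x _.
rewrite !sum_pair -big_split /= !mulr_sumr -big_split /=.
apply: eq_bigr => y _.
rewrite /Qalpha /pitilde /Pitilde /Rw /=.
rewrite !(scale_term _ _ _ _ _ b0).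
have [->|an0] := eqVneq alpha 0.
  rewrite !mul0r !eqxx /=. rewrite /PiMat /=; ring.
have ap : 0 < alpha by rewrite lt_def an0.
rewrite !(scale_term _ _ _ _ _ ap) /PiMat /=; ring.
Qed.

Lemma nth_ltn_ge (t : seq nat) m : sorted ltn t -> all (fun x => m <= x)%N t ->
  forall j, (j < size t)%N -> (m + j <= nth 0%N t j)%N.
Proof.
elim: t m => [|a t IH] m //= st /andP[ma alt] [|j] hj /=.
  by rewrite addn0.
rewrite addnS -addSn; apply: IH => //.
  exact: path_sorted st.
have := order_path_min ltn_trans st.
apply: sub_all => x /=; exact: leq_ltn_trans ma.
Qed.

Lemma ext_entropy n k (p : 'I_n -> R) :
  \sum_(x : 'I_n) p x = 1 -> (2 <= k)%N -> (k <= n)%N ->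
  blockEntropy p (extremalPartition n k) =
  - (\sum_(x : 'I_n | (x < k.-1)%N) psi (p x) + psi (1 - \sum_(x : 'I_n | (x < k.-1)%N) p x)).
Proof.
move=> ps k2 kn.
rewrite /blockEntropy /extremalPartition setUC big_setU1 /=; last first.
  apply/imsetP => -[x]; rewrite inE => xk eq.
  have : x \in [set x0 : 'I_n | (k.-1 <= x0)%N] by rewrite eq set11.
  by rewrite inE leqNgt xk.
rewrite big_imset /=; last by move=> x y _ _; apply: set1_inj.
rewrite addrC; congr (- (_ + _)).
  by apply: eq_big => x; rewrite ?inE // /massOf big_set1.
have -> : massOf p [set x0 : 'I_n | (k.-1 <= x0)%N] = 1 - \sum_(x : 'I_n | (x < k.-1)%N) p x.
  rewrite -ps (bigID (fun x : 'I_n => (x < k.-1)%N)) /= addrC addrK /massOf.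
  by apply: eq_bigl => x; rewrite inE leqNgt.
by [].
Qed.

Lemma ext_part n k : (2 <= k)%N -> (k <= n)%N ->
  extremalPartition n k \in kPartitions n k.
Proof.
move=> k2 kn.
have kn' : (k.-1 < n)%N by case: k k2 kn.
set L := [set x0 : 'I_n | (k.-1 <= x0)%N].
set A := [set [set x] | x : 'I_n & (x < k.-1)%N].
have LA : L \notin A.
  apply/imsetP => -[x]; rewrite inE => xk eq.
  have : x \in L by rewrite eq set11.
  by rewrite inE leqNgt xk.
rewrite inE /extremalPartition -/L -/A; apply/andP; split; last first.
  rewrite setUC cardsU1 LA card_imset; last exact: set1_inj.
  apply/eqP.
  have -> : #|[set x : 'I_n | (x < k.-1)%N]| = k.-1.
    rewrite -sum1_card (eq_bigl (fun i : 'I_n => (i < k.-1)%N)); last by move=> i; rewrite inE.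
    by rewrite -(big_ord_widen n (fun _ => 1%N) (ltnW kn')) sum1_card card_ord.
  by rewrite add1n; case: (k) k2.
apply/and3P; split.
- apply/eqP/setP => x; rewrite inE /cover; apply/bigcupP.
  case: (ltnP x k.-1) => xk.
    exists [set x]; last by rewrite set11.
    by rewrite inE; apply/orP; left; apply/imsetP; exists x; rewrite ?inE.
  by exists L; rewrite ?inE ?xk // eqxx orbT.
- apply/trivIsetP => O1 O2 h1 h2 ne.
  move: h1 h2 ne; rewrite !inE => /orP[/imsetP[x1 hx1 ->]|/eqP->] /orP[/imsetP[x2 hx2 ->]|/eqP->] ne.
  + rewrite disjoints1 in_set1; apply: contra ne => /eqP->; by [].
  + by rewrite disjoints1 inE -ltnNge; rewrite inE in hx1.
  + by rewrite disjoint_sym disjoints1 inE -ltnNge; rewrite inE in hx2.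
  + by rewrite eqxx in ne.
- rewrite !inE negb_or; apply/andP; split.
    by apply/imsetP => -[x _] /setP /(_ x); rewrite !inE eqxx.
  apply/eqP => /setP /(_ (Ordinal kn')); by rewrite !inE /= leqnn.
Qed.

Lemma B_bound n k (p : 'I_n -> R) (B : {set {set 'I_n}}) :
  (forall x, 0 < p x) -> \sum_(x : 'I_n) p x = 1 ->
  (forall x y : 'I_n, (x <= y)%N -> p x <= p y) ->
  (2 <= k)%N -> (k <= n)%N -> partition B [set: 'I_n] -> #|B| = k ->
  \sum_(O in B) psi (massOf p O) <=
  \sum_(x : 'I_n | (x < k.-1)%N) psi (p x) + psi (1 - \sum_(x : 'I_n | (x < k.-1)%N) p x).
Proof.
move=> pp ps psort k2 kn /and3P[/eqP cov triv nz] cB.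
have kn' : (k.-1 < n)%N by case: k k2 kn cB.
have msum : \sum_(O in B) massOf p O = 1.
  transitivity (\sum_(x in cover B) p x); first by rewrite (big_trivIset _ triv).
  by rewrite cov -ps; apply: eq_bigl => x; rewrite inE.
have [O0 O0B] : exists O0, O0 \in B.
  have : B != set0 by rewrite -card_gt0 cB; case: k k2 {kn kn' cB}.
  by case/set0Pn => O0 O0B; exists O0.
case: (arg_maxP (fun O : {set 'I_n} => massOf p O) O0B) => M MB0 Mmax.
have MB : M \in B by exact: MB0.
set B' := B :\ M.
have cB' : #|B'| = k.-1 by move: cB; rewrite (cardsD1 M B) MB add1n => <-.
pose key (O : {set 'I_n}) : nat := if [pick x in O] is Some x then nat_of_ord x else 0%N.
have keyP : forall O, O \in B -> exists2 x : 'I_n, x \in O & key O = x.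
  move=> O OB; rewrite /key; case: pickP => [x xO|none]; first by exists x.
  have : O != set0 by apply: contraNneq nz => <-.
  by case/set0Pn => x; rewrite none.
have keyinj : {in B &, injective key}.
  move=> O1 O2 O1B O2B eq.
  have [x1 x1O k1] := keyP O1 O1B; have [x2 x2O k2'] := keyP O2 O2B.
  have ex : x1 = x2 by apply: ord_inj; rewrite -k1 -k2' eq.
  rewrite -ex in x2O.
  by rewrite -(def_pblock triv O1B x1O) -(def_pblock triv O2B x2O).
set s := sort (fun O1 O2 => (key O1 <= key O2)%N) (enum B').
have pms : perm_eq s (enum B') by rewrite perm_sort perm_refl.
have sz : size s = k.-1 by rewrite size_sort -cardE cB'.
have sB : forall O, O \in s -> (O \in B) && (O != M).
  by move=> O; rewrite (perm_mem pms) mem_enum in_setD1 andbC.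
have st : sorted ltn (map key s).
  rewrite ltn_sorted_uniq_leq; apply/andP; split.
    rewrite map_inj_in_uniq ?sort_uniq ?enum_uniq //.
    by move=> O1 O2 /sB /andP[h1 _] /sB /andP[h2 _]; apply: keyinj.
  rewrite sorted_map; apply: sort_sorted => a b; exact: leq_total.
have nthge : forall j, (j < k.-1)%N -> (j <= key (nth set0 s j))%N.
  move=> j hj.
  have := @nth_ltn_ge _ 0%N st (introT allP (fun _ _ => leq0n _)) j.
  by rewrite size_map sz add0n (nth_map set0) ?sz //; apply.
have sumG : forall G : {set 'I_n} -> R,
    \sum_(O in B) G O = G M + \sum_(x : 'I_n | (x < k.-1)%N) G (nth set0 s x).
  move=> G; rewrite (bigD1 M MB) /=; congr (_ + _).
  rewrite (eq_bigl (fun O => O \in B')); last by move=> O; rewrite in_setD1 andbC.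
  rewrite -big_enum -(perm_big _ pms) (big_nth set0) sz big_mkord.
  exact: (big_ord_widen n (fun j => G (nth set0 s j)) (ltnW kn')).
have Mpos : 0 < massOf p M.
  have : M != set0 by apply: contraNneq nz => <-.
  by case/set0Pn => x xM; exact: massOf_gt0 pp xM.
have H := @psi_sum _ (fun x : 'I_n => (x < k.-1)%N) (fun x => massOf p (nth set0 s x)) p
  (massOf p M) Mpos.
have cond : forall x : 'I_n, (x < k.-1)%N ->
   0 < p x /\ p x <= massOf p (nth set0 s x) /\ massOf p (nth set0 s x) <= massOf p M.
  move=> x hx; set O := nth set0 s x.
  have /sB /andP[OB OM] : O \in s by rewrite mem_nth ?sz.
  split; first exact: pp.
  split; last exact: Mmax.
  have [z zO kz] := keyP O OB.
  have xz : (x <= z)%N by rewrite -kz; exact: nthge.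
  apply: le_trans (psort _ _ xz) _.
  rewrite /massOf (bigD1 z zO) /= ler_wpDr //.
  by apply: sumr_ge0 => i _; apply: ltW.
have {}H := H cond.
rewrite sumrB addrA -sumG msum in H.
move: H; rewrite (sumG (fun O => psi (massOf p O))); lra.
Qed.


Lemma argmin_ext (T : finType) (S : {set T}) (f g : T -> R) :
  (forall x y, x \in S -> y \in S -> (f x <= f y) = (g x <= g y)) ->
  argmin S f = argmin S g.
Proof.
move=> H; apply/setP => x; rewrite !inE; case xS: (x \in S) => //=.
by apply: eq_forallb_in => y yS; apply: H.
Qed.

End Aux.

Theorem proposition5p3 (R : realType) (n k : nat) (pi : 'rV[R]_n) (P : 'M[R]_n)
  (alpha : R)
  (pi_pos : forall x : 'I_n, 0 < pi ord0 x)
  (pi_sum : \sum_(x : 'I_n) pi ord0 x = 1)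
  (pi_sorted : forall x y : 'I_n, (x <= y)%N -> pi ord0 x <= pi ord0 y)
  (P_nonneg : forall x y : 'I_n, 0 <= P x y)
  (P_stoch : forall x : 'I_n, \sum_(y : 'I_n) P x y = 1)
  (P_stat : pi *m P = pi)
  (hk2 : (2 <= k)%N) (hkn : (k <= n)%N)
  (ha0 : 0 <= alpha) (ha1 : alpha < 1) :
  let p := fun x : 'I_n => pi ord0 x in
  let Parts := kPartitions n k in
  argmin Parts (fun B => KLdiv (pitilde p alpha) (Qalpha p P alpha B) (Pitilde p alpha))
    = argmin Parts (fun B => KLdiv p (gibbs p B) (PiMat p))
  /\ argmin Parts (fun B => KLdiv p (gibbs p B) (PiMat p))
    = argmin Parts (fun B => blockEntropy p B)
  /\ extremalPartition n k \in argmin Parts (fun B => blockEntropy p B).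
Proof.
move=> p Parts.
have KLGe : forall B, B \in Parts -> KLdiv p (gibbs p B) (PiMat p) = blockEntropy p B.
  by move=> B; rewrite inE => /andP[pB _]; apply: KLG.
split.
  apply: argmin_ext => B1 B2 h1 h2.
  by rewrite !KLQ // lerD2r ler_pM2l // subr_gt0.
split.
  by apply: argmin_ext => B1 B2 h1 h2; rewrite !KLGe.
rewrite inE ext_part //=; apply/forall_inP => B hB.
move: hB; rewrite inE => /andP[pB /eqP cB].
rewrite ext_entropy // /blockEntropy lerN2.
exact: B_bound.
Qed.
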